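(* Let $G=\mathbb{R}\ltimes\mathbb{R}^2$, where $t\in\mathbb{R}$ acts on $\mathbb{R}^2$ by rotation through angle $2\pi t$. Let $\varrho=\begin{bmatrix}1&0\\0&-1\end{bmatrix}$ and define $\varphi(t,x)=(-t,2\varrho x)$ for $t\in\mathbb{R}$, $x\in\mathbb{R}^2$. Then $\varphi$ is a continuous automorphism of $G$ with $R(\varphi)=1$, and the automorphism $\varphi_1$ it induces on $G/Z(G)\cong \mathrm{SO}(2,\mathbb{R})\ltimes\mathbb{R}^2$ (standard action) also satisfies $R(\varphi_1)=1$. Consequently neither $\mathbb{R}\ltimes\mathbb{R}^2$ nor $\mathrm{SO}(2,\mathbb{R})\ltimes\mathbb{R}^2$ (with these actions) has the topological $R_\infty$-property.
   Context: For an automorphism $\varphi$ of a group $G$, the $\varphi$-twisted conjugacy classes are the equivalence classes of the relation $x\sim_\varphi y$ iff $y=gx\varphi(g)^{-1}$ for some $g\in G$; $R(\varphi)\in\mathbb{N}\cup\{\infty\}$ is their number. $Z(G)$ is the center of $G$ (here the subgroup $\{(k,0):k\in\mathbb{Z}\}$). A topological group $G$ has the topological $R_\infty$-property if $R(\varphi)=\infty$ for every automorphism $\varphi$ of $G$ that is a homeomorphism. *)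

(* Defs.v *)
From HB Require Import structures.
From mathcomp Require Import all_boot all_order all_algebra.
From mathcomp Require Import all_classical all_reals all_analysis.
Set Implicit Arguments. Unset Strict Implicit. Unset Printing Implicit Defensive.
Import Order.TTheory GRing.Theory Num.Theory.
Import numFieldNormedType.Exports.
Local Open Scope classical_set_scope.
Local Open Scope ring_scope.

Section Generic.
Context {T : topologicalType}.

Definition twisted_rel (S : set T) (mul : T -> T -> T) (inv : T -> T)
  (f : T -> T) (x y : T) : Prop :=
  exists g, S g /\ y = mul (mul g x) (inv (f g)).

Definition twisted_class (S : set T) mul inv (f : T -> T) (x : T) : set T :=
  [set y | S y /\ twisted_rel S mul inv f x y].

Definition reidemeister_classes (S : set T) mul inv (f : T -> T) : set (set T) :=
  [set twisted_class S mul inv f x | x in S].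

Definition reidemeister_one (S : set T) mul inv f : Prop :=
  exists c, reidemeister_classes S mul inv f = [set c].

Definition reidemeister_infinite (S : set T) mul inv f : Prop :=
  infinite_set (reidemeister_classes S mul inv f).

Definition is_automorphism (S : set T) (mul : T -> T -> T) (f : T -> T) : Prop :=
  set_bij S S f /\ (forall x y, S x -> S y -> f (mul x y) = mul (f x) (f y)).

Definition is_homeomorphism (S : set T) (f : T -> T) : Prop :=
  {within S, continuous f} /\
  exists h : T -> T, set_fun S S h /\
    (forall x, S x -> h (f x) = x) /\ (forall x, S x -> f (h x) = x) /\
    {within S, continuous h}.

Definition group_center (S : set T) (mul : T -> T -> T) : set T :=
  [set z | S z /\ forall g, S g -> mul z g = mul g z].

Definition topological_R_infty (S : set T) mul inv : Prop :=
  forall f, is_automorphism S mul f -> is_homeomorphism S f ->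
    reidemeister_infinite S mul inv f.
End Generic.

Notation vec2 R := (R * R)%type.
Notation GT R := (R * (R * R))%type.
Notation QT R := ((R * R) * (R * R))%type.
Section Concrete.
Variable R : realType.
Local Notation vec2 := (vec2 R).
Local Notation GT := (GT R).
Local Notation QT := (QT R).

Definition vadd (x y : vec2) : vec2 := (x.1 + y.1, x.2 + y.2).
Definition vopp (x : vec2) : vec2 := (- x.1, - x.2).
Definition rotcs (c s : R) (x : vec2) : vec2 := (c * x.1 - s * x.2, s * x.1 + c * x.2).
Definition rot2pi (t : R) (x : vec2) : vec2 := rotcs (cos (2 * pi * t)) (sin (2 * pi * t)) x.
Definition rho (x : vec2) : vec2 := (x.1, - x.2).
Definition vscale (a : R) (x : vec2) : vec2 := (a * x.1, a * x.2).

Definition Gmul (g h : GT) : GT := (g.1 + h.1, vadd g.2 (rot2pi g.1 h.2)).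
Definition Ginv (g : GT) : GT := (- g.1, vopp (rot2pi (- g.1) g.2)).
Definition Gone : GT := (0, (0, 0)).
Definition Gset : set GT := setT.

Definition phi (g : GT) : GT := (- g.1, vscale 2 (rho g.2)).

(* SO(2,R) |x R^2, SO(2) realised as pairs (c,s) with c^2+s^2 = 1
   (the matrix [[c,-s],[s,c]]), acting by the standard action *)
Definition Qset : set QT := [set q | q.1.1 ^+ 2 + q.1.2 ^+ 2 = 1].
Definition Qmul (p q : QT) : QT :=
  ((p.1.1 * q.1.1 - p.1.2 * q.1.2, p.1.2 * q.1.1 + p.1.1 * q.1.2),
   vadd p.2 (rotcs p.1.1 p.1.2 q.2)).
Definition Qinv (p : QT) : QT :=
  ((p.1.1, - p.1.2), vopp (rotcs p.1.1 (- p.1.2) p.2)).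
Definition Qone : QT := ((1, 0), (0, 0)).

(* the quotient map G -> G/Z(G) = SO(2) |x R^2 *)
Definition qmap (g : GT) : QT := ((cos (2 * pi * g.1), sin (2 * pi * g.1)), g.2).

(* the automorphism induced by phi on SO(2) |x R^2 *)
Definition phi1 (q : QT) : QT := ((q.1.1, - q.1.2), vscale 2 (rho q.2)).
End Concrete.

(* Main.v *)
Require Import Defs.
From HB Require Import structures.
From mathcomp Require Import all_boot all_order all_algebra.
From mathcomp Require Import all_classical all_reals all_analysis.
From mathcomp Require Import ring lra.
Import Order.TTheory GRing.Theory Num.Theory.
Import numFieldNormedType.Exports.
Local Open Scope classical_set_scope.
Local Open Scope ring_scope.

Section Trig.
Variable R : realType.

Lemma cos_sin_nat (n : nat) : cos (2 * pi * n%:R) = 1 :> R /\ sin (2 * pi * n%:R) = 0 :> R.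
Proof.
have -> : 2 * pi * n%:R = 0 + (pi *+ 2) *+ n :> R.
  by rewrite add0r mulr_natr mulr_natl.
by rewrite (periodicn (@cosD2pi R)) (periodicn (@sinD2pi R)) cos0 sin0.
Qed.

Lemma cos_sin_int (k : int) : cos (2 * pi * k%:~R) = 1 :> R /\ sin (2 * pi * k%:~R) = 0 :> R.
Proof.
case: k => n; first exact: cos_sin_nat.
rewrite NegzE mulrNz mulrN cosN sinN.
have [-> ->] := cos_sin_nat n.+1; split => //; exact: oppr0.
Qed.

Lemma int_of_cos1 (t : R) : cos (2 * pi * t) = 1 -> exists k : int, t = k%:~R.
Proof.
move=> H.
set k := Num.floor t.
have /andP[h1 h2] := floor_itv t.
rewrite -/k intrD in h2.
set r := t - k%:~R.
have r0 : 0 <= r by rewrite /r subr_ge0.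
have r1 : r < 1 by rewrite /r ltrBlDl.
have Hr : cos (2 * pi * r) = 1.
  rewrite /r mulrBr cosB H; have [-> ->] := cos_sin_int k; by rewrite mulr1 mulr0 addr0.
have pi0 := @pi_gt0 R.
case: (lerP (2 * pi * r) pi) => hp.
  have := @cosK R (2 * pi * r).
  rewrite in_itv /= hp andbT Hr acos1 => /(_ _)/esym.
  have -> : (0 <= 2 * pi * r) = true by apply/idP; apply: mulr_ge0 => //; apply: mulr_ge0 => //; lra.
  move=> /(_ isT) /eqP; rewrite mulf_eq0 => /orP[|/eqP r00].
    rewrite mulf_eq0 => /orP[/eqP|/eqP]; lra.
  by exists k; rewrite -(subrK (k%:~R) t) -/r r00 add0r.
have := @cosKN R (2 * pi * r - pi *+ 2).
have -> : cos (2 * pi * r - pi *+ 2) = 1 by rewrite cosB cos2pi sin2pi Hr; ring.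
rewrite acos1.
have hh : - pi <= 2 * pi * r - pi *+ 2 <= 0.
  apply/andP; split; first by rewrite mulr2n; lra.
  rewrite mulr2n subr_le0; have : pi * r <= pi * 1 by rewrite ler_pM2l //; lra.
  lra.
move=> /(_ hh) /eqP; rewrite eq_sym oppr_eq0 subr_eq0 => /eqP E.
exfalso; have : pi * r = pi * 1 by rewrite mulr2n in E; lra.
move/mulfI => /(_ (lt0r_neq0 pi0)); lra.
Qed.

Lemma polar (c s : R) : c ^+ 2 + s ^+ 2 = 1 ->
  exists t : R, cos (2 * pi * t) = c /\ sin (2 * pi * t) = s.
Proof.
move=> H.
have hc : c \in `[-1, 1].
  rewrite in_itv /=; apply/andP; split; nra.
have hc' : -1 <= c <= 1 by move: hc; rewrite in_itv.
have pi0 := @pi_gt0 R.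
have sa := sin_acos hc'.
have E : 1 - c ^+ 2 = s ^+ 2 by lra.
rewrite E sqrtr_sqr in sa.
have ca := acosK hc.
have key (th : R) : exists t, 2 * pi * t = th.
  by exists (th / (2 * pi)); field; apply/eqP; lra.
case: (lerP 0 s) => hs.
  have [t ht] := key (acos c); by exists t; rewrite ht ca sa ger0_norm //.
have [t ht] := key (- acos c); by exists t; rewrite ht cosN sinN ca sa ltr0_norm // opprK.
Qed.


Lemma rot_comp (a b : R) (x : R * R) :
  rot2pi a (rot2pi b x) = rot2pi (a + b) x.
Proof.
case: x => x1 x2; rewrite /rot2pi /rotcs /= [2 * pi * (a + b)]mulrDr cosD sinD.
congr (_, _); ring.
Qed.

Lemma rot_opp (a : R) (x : R * R) : rot2pi a (vopp x) = vopp (rot2pi a x).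
Proof. case: x => x1 x2; rewrite /rot2pi /rotcs /vopp /=; congr (_, _); ring. Qed.

Lemma rot_int (k : int) (x : R * R) : rot2pi k%:~R x = x.
Proof.
case: x => x1 x2; rewrite /rot2pi /rotcs /=; have [-> ->] := cos_sin_int k.
congr (_, _); ring.
Qed.

Lemma rot0 (x : R * R) : rot2pi 0 x = x.
Proof. by have := rot_int 0 x. Qed.

Lemma center_iff (g : GT R) :
  group_center (@Gset R) (@Gmul R) g <-> exists k : int, g = (k%:~R, (0, 0)).
Proof.
split.
  case=> _ H; case: g H => t [x1 x2] H.
  have := H (0, (1, 0)) I => /(congr1 (fun p => p.2.1)).
  rewrite /Gmul /vadd /rot2pi /rotcs /= !mulr0 cos0 sin0 !mulr1 !mul0r !mul1r => hc.
  have hc1 : cos (2 * pi * t) = 1 by lra.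
  have [k hk] := int_of_cos1 _ hc1.
  have E := H (1 / 2, (0, 0)) I.
  have E1 := congr1 (fun p => p.2.1) E; have E2 := congr1 (fun p => p.2.2) E.
  move: E1 E2; rewrite /Gmul /vadd /rot2pi /rotcs /=.
  have -> : 2 * pi * (1 / 2) = pi :> R by field.
  rewrite cospi sinpi !mulr0 !mul0r !subr0 !addr0 => E1 E2.
  exists k; rewrite hk; congr (_, (_, _)); lra.
case=> k ->; split => // -[s [y1 y2]] _.
rewrite /Gmul; congr (_, _); first by rewrite addrC.
rewrite rot_int /vadd /rot2pi /rotcs /=; congr (_, _); ring.
Qed.

Lemma center_eq : group_center (@Gset R) (@Gmul R) = [set g | exists k : int, g = (k%:~R, (0, 0))].
Proof. by apply/funext => g; apply/propext; exact: center_iff. Qed.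

Lemma qmap_mul (g h : GT R) : qmap (Gmul g h) = Qmul (qmap g) (qmap h).
Proof.
case: g => t x; case: h => s y; rewrite /qmap /Gmul /Qmul /=.
by rewrite [2 * pi * (t + s)]mulrDr cosD sinD.
Qed.

Lemma qmap_surj : set_surj (@Gset R) (@Qset R) (@qmap R).
Proof.
move=> [[c s] v] H; rewrite /Qset /= in H; have [t [Hc Hs]] := polar _ _ H.
by exists (t, v) => //; rewrite /qmap /= Hc Hs.
Qed.

Lemma qmap_fun : set_fun (@Gset R) (@Qset R) (@qmap R).
Proof. by move=> g _; rewrite /Qset /= cos2Dsin2. Qed.

Lemma qmap_ker (g : GT R) : qmap g = Qone R <-> group_center (@Gset R) (@Gmul R) g.
Proof.
rewrite center_iff; split.
  case: g => t [x1 x2]; rewrite /qmap /Qone /= => -[hc hs h1 h2].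
  have [k hk] := int_of_cos1 _ hc.
  by exists k; rewrite hk h1 h2.
case=> k ->; rewrite /qmap /Qone /=; have [-> ->] := cos_sin_int k; by [].
Qed.

Lemma phi1_qmap (g : GT R) : phi1 (qmap g) = qmap (phi g).
Proof. by case: g => t x; rewrite /phi1 /qmap /phi /= mulrN cosN sinN. Qed.

Lemma qmap_inv (g : GT R) : qmap (Ginv g) = Qinv (qmap g).
Proof.
case: g => t [x1 x2]; rewrite /qmap /Ginv /Qinv /rot2pi /= mulrN cosN sinN.
by [].
Qed.

Lemma phi_hom (g h : GT R) : phi (Gmul g h) = Gmul (phi g) (phi h).
Proof.
case: g => t [x1 x2]; case: h => s [y1 y2].
rewrite /phi /Gmul /vadd /vscale /rho /rot2pi /rotcs /= [2 * pi * - _]mulrN cosN sinN.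
congr (_, (_, _)); ring.
Qed.

Lemma G_rel (x y : GT R) : twisted_rel (@Gset R) (@Gmul R) (@Ginv R) (@phi R) x y.
Proof.
case: x => t [a1 a2]; case: y => s [b1 b2].
pose u := (s - t) / 2.
pose p := rot2pi u (a1, a2).
pose c := cos (2 * pi * s); pose sn := sin (2 * pi * s).
pose q := c ^+ 2 + sn ^+ 2.
have q1 : q = 1 by rewrite /q /c /sn cos2Dsin2.
pose w1 := b1 - p.1; pose w2 := b2 - p.2.
pose v1 := (w1 + 2 * (c * w1 + sn * w2)) / (1 - 4 * q).
pose v2 := (w2 + 2 * (sn * w1 - c * w2)) / (1 - 4 * q).
exists (u, (v1, v2)); split => //.
rewrite /Gmul /Ginv /phi /= opprK.
have E : u + t + u = s by rewrite /u; field.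
rewrite rot_opp rot_comp E -/p.
have d0 : 1 - 4 * q != 0 by rewrite q1; apply/eqP; lra.
rewrite /vadd /vopp /vscale /rho /rot2pi /rotcs /= -/c -/sn.
congr (_, (_, _)).
  rewrite /v1 /v2 /w1 /w2 /p /rot2pi /rotcs /=; have d0' : 1 - 4 * (c ^+ 2 + sn ^+ 2) != 0 := d0; rewrite /q; clear E d0 q1 v1 v2 w1 w2 p q; clearbody c sn u; field; exact: d0'.
rewrite /v1 /v2 /w1 /w2 /p /rot2pi /rotcs /=; have d0' : 1 - 4 * (c ^+ 2 + sn ^+ 2) != 0 := d0; rewrite /q; clear E d0 q1 v1 v2 w1 w2 p q; clearbody c sn u; field; exact: d0'.
Qed.

Lemma cont3 (T : topologicalType) (a b c : T -> R) :
  continuous a -> continuous b -> continuous c ->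
  continuous (fun x => (a x, (b x, c x))).
Proof.
move=> ca cb cc x.
apply: (@cvg_pair _ _ _ (nbhs x) (nbhs (a x)) (nbhs (b x, c x))); first exact: ca.
apply: (@cvg_pair _ _ _ (nbhs x) (nbhs (b x)) (nbhs (c x))); [exact: cb|exact: cc].
Qed.

Lemma cont4 (T : topologicalType) (a b c d : T -> R) :
  continuous a -> continuous b -> continuous c -> continuous d ->
  continuous (fun x => ((a x, b x), (c x, d x))).
Proof.
move=> ca cb cc cd x.
apply: (@cvg_pair _ _ _ (nbhs x) (nbhs (a x, b x)) (nbhs (c x, d x))).
  apply: (@cvg_pair _ _ _ (nbhs x) (nbhs (a x)) (nbhs (b x))); [exact: ca|exact: cb].
apply: (@cvg_pair _ _ _ (nbhs x) (nbhs (c x)) (nbhs (d x))); [exact: cc|exact: cd].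
Qed.

Lemma contG1 : continuous (fun g : GT R => g.1).
Proof. move=> x; exact: cvg_fst. Qed.
Lemma contG21 : continuous (fun g : GT R => g.2.1).
Proof. move=> x; apply: (@cvg_comp _ _ _ snd fst (nbhs x) (nbhs x.2)); [exact: cvg_snd|exact: cvg_fst]. Qed.
Lemma contG22 : continuous (fun g : GT R => g.2.2).
Proof. move=> x; apply: (@cvg_comp _ _ _ snd snd (nbhs x) (nbhs x.2)); [exact: cvg_snd|exact: cvg_snd]. Qed.
Lemma contQ11 : continuous (fun g : QT R => g.1.1).
Proof. move=> x; apply: (@cvg_comp _ _ _ fst fst (nbhs x) (nbhs x.1)); [exact: cvg_fst|exact: cvg_fst]. Qed.
Lemma contQ12 : continuous (fun g : QT R => g.1.2).
Proof. move=> x; apply: (@cvg_comp _ _ _ fst snd (nbhs x) (nbhs x.1)); [exact: cvg_fst|exact: cvg_snd]. Qed.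
Lemma contQ21 : continuous (fun g : QT R => g.2.1).
Proof. move=> x; apply: (@cvg_comp _ _ _ snd fst (nbhs x) (nbhs x.2)); [exact: cvg_snd|exact: cvg_fst]. Qed.
Lemma contQ22 : continuous (fun g : QT R => g.2.2).
Proof. move=> x; apply: (@cvg_comp _ _ _ snd snd (nbhs x) (nbhs x.2)); [exact: cvg_snd|exact: cvg_snd]. Qed.

Lemma contN (T : topologicalType) (a : T -> R) : continuous a -> continuous (fun x => - a x).
Proof. by move=> ca x; apply: cvgN; exact: ca. Qed.
Lemma contMl (T : topologicalType) (k : R) (a : T -> R) : continuous a -> continuous (fun x => k * a x).
Proof. by move=> ca x; apply: cvgMl_tmp; exact: ca. Qed.
Lemma contMr (T : topologicalType) (k : R) (a : T -> R) : continuous a -> continuous (fun x => a x * k).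
Proof. by move=> ca x; apply: cvgMr_tmp; exact: ca. Qed.

Definition phiinv (g : GT R) : GT R := (- g.1, (g.2.1 / 2, - (g.2.2 / 2))).
Definition phi1inv (q : QT R) : QT R := ((q.1.1, - q.1.2), (q.2.1 / 2, - (q.2.2 / 2))).

Lemma cont_phi : continuous (@phi R).
Proof.
have -> : @phi R = (fun g : GT R => (- g.1, (2 * g.2.1, 2 * (- g.2.2)))).
  by apply: funext => -[t [a b]].
apply: cont3; [apply: contN; exact: contG1|apply: contMl; exact: contG21|].
apply: contMl; apply: contN; exact: contG22.
Qed.

Lemma cont_phiinv : continuous phiinv.
Proof.
apply: cont3; [apply: contN; exact: contG1|apply: contMr; exact: contG21|].
apply: contN; apply: contMr; exact: contG22.
Qed.

Lemma cont_phi1 : continuous (@phi1 R).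
Proof.
have -> : @phi1 R = (fun g : QT R => ((g.1.1, - g.1.2), (2 * g.2.1, 2 * (- g.2.2)))).
  by apply: funext => -[[c s] [a b]].
apply: cont4; [exact: contQ11|apply: contN; exact: contQ12|apply: contMl; exact: contQ21|].
apply: contMl; apply: contN; exact: contQ22.
Qed.

Lemma cont_phi1inv : continuous phi1inv.
Proof.
apply: cont4; [exact: contQ11|apply: contN; exact: contQ12|apply: contMr; exact: contQ21|].
apply: contN; apply: contMr; exact: contQ22.
Qed.

Lemma phi_auto : is_automorphism (@Gset R) (@Gmul R) (@phi R).
Proof.
split; last by move=> x y _ _; exact: phi_hom.
split => //.
  move=> [t [a b]] [s [c d]] _ _; rewrite /phi /vscale /rho /= => -[h1 h2 h3].
  congr (_, (_, _)); lra.
move=> [t [a b]] _; exists (phiinv (t, (a, b))) => //.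
rewrite /phi /phiinv /vscale /rho /=; congr (_, (_, _)); by field.
Qed.

Lemma phi_homeo : is_homeomorphism (@Gset R) (@phi R).
Proof.
split; first exact/continuous_subspaceT/cont_phi.
exists phiinv; split => //; split.
  move=> [t [a b]] _; rewrite /phi /phiinv /vscale /rho /=; congr (_, (_, _)); by field.
split; last exact/continuous_subspaceT/cont_phiinv.
move=> [t [a b]] _; rewrite /phi /phiinv /vscale /rho /=; congr (_, (_, _)); by field.
Qed.

Lemma phi1_auto : is_automorphism (@Qset R) (@Qmul R) (@phi1 R).
Proof.
split; last first.
  move=> [[c1 s1] [x1 x2]] [[c2 s2] [y1 y2]] _ _.
  rewrite /phi1 /Qmul /vadd /vscale /rho /rotcs /=; congr ((_, _), (_, _)); ring.
split.
- move=> [[c s] v]; rewrite /Qset /= => H; lra.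
- move=> [[c s] [a b]] [[c' s'] [a' b']] _ _; rewrite /phi1 /vscale /rho /= => -[h1 h2 h3 h4].
  congr ((_, _), (_, _)); lra.
move=> [[c s] [a b]] H; exists (phi1inv ((c, s), (a, b))).
  by move: H; rewrite /Qset /= => H; lra.
rewrite /phi1 /phi1inv /vscale /rho /=; congr ((_, _), (_, _)); by field.
Qed.

Lemma phi1_homeo : is_homeomorphism (@Qset R) (@phi1 R).
Proof.
split; first exact/continuous_subspaceT/cont_phi1.
exists phi1inv; split.
  by move=> [[c s] v]; rewrite /Qset /= => H; lra.
split.
  move=> [[c s] [a b]] _; rewrite /phi1 /phi1inv /vscale /rho /=; congr ((_, _), (_, _)); by field.
split; last exact/continuous_subspaceT/cont_phi1inv.
move=> [[c s] [a b]] _; rewrite /phi1 /phi1inv /vscale /rho /=; congr ((_, _), (_, _)); by field.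
Qed.

End Trig.

Lemma one_of_all (T : topologicalType) (S : set T) mul inv (f : T -> T) (x0 : T) :
  S x0 -> (forall x y, S x -> S y -> twisted_rel S mul inv f x y) ->
  reidemeister_one S mul inv f.
Proof.
move=> S0 H.
have cl x : S x -> twisted_class S mul inv f x = S.
  move=> Sx; apply/seteqP; split => y /=; first by case.
  by move=> Sy; split => //; exact: H.
exists S; apply/seteqP; split.
  by move=> _ [x Sx <-]; rewrite /= cl.
by move=> _ ->; exists x0 => //; rewrite cl.
Qed.

Lemma Q_rel (R : realType) (x y : QT R) : Qset x -> Qset y ->
  twisted_rel (@Qset R) (@Qmul R) (@Qinv R) (@phi1 R) x y.
Proof.
move=> Sx Sy.
have [gx _ <-] := @qmap_surj R _ Sx.
have [gy _ <-] := @qmap_surj R _ Sy.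
have [g [_ ->]] := @G_rel R gx gy.
exists (qmap g); split; first exact: qmap_fun.
by rewrite !qmap_mul qmap_inv -phi1_qmap.
Qed.

Theorem mainTheorem15 (R : realType) :
  is_automorphism (@Gset R) (@Gmul R) (@phi R) /\
  is_homeomorphism (@Gset R) (@phi R) /\
  reidemeister_one (@Gset R) (@Gmul R) (@Ginv R) (@phi R) /\
  group_center (@Gset R) (@Gmul R) = [set g | exists k : int, g = (k%:~R, (0, 0))] /\
  (forall g h : GT R, qmap (Gmul g h) = Qmul (qmap g) (qmap h)) /\
  set_surj (@Gset R) (@Qset R) (@qmap R) /\
  set_fun (@Gset R) (@Qset R) (@qmap R) /\
  (forall g : GT R, qmap g = Qone R <-> group_center (@Gset R) (@Gmul R) g) /\
  (forall g : GT R, phi1 (qmap g) = qmap (phi g)) /\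
  is_automorphism (@Qset R) (@Qmul R) (@phi1 R) /\
  is_homeomorphism (@Qset R) (@phi1 R) /\
  reidemeister_one (@Qset R) (@Qmul R) (@Qinv R) (@phi1 R) /\
  ~ topological_R_infty (@Gset R) (@Gmul R) (@Ginv R) /\
  ~ topological_R_infty (@Qset R) (@Qmul R) (@Qinv R).
Proof.
have G1 : reidemeister_one (@Gset R) (@Gmul R) (@Ginv R) (@phi R).
  by apply: (@one_of_all _ _ _ _ _ (Gone R)) => // x y _ _; exact: G_rel.
have Q1 : reidemeister_one (@Qset R) (@Qmul R) (@Qinv R) (@phi1 R).
  apply: (@one_of_all _ _ _ _ _ (Qone R)); last exact: Q_rel.
  by rewrite /Qset /Qone /=; lra.
split; first exact: phi_auto.
split; first exact: phi_homeo.
split; first exact: G1.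
split; first exact: center_eq.
split; first exact: qmap_mul.
split; first exact: qmap_surj.
split; first exact: qmap_fun.
split; first exact: qmap_ker.
split; first exact: phi1_qmap.
split; first exact: phi1_auto.
split; first exact: phi1_homeo.
split; first exact: Q1.
split.
  move=> H; have := H _ (@phi_auto R) (@phi_homeo R).
  rewrite /reidemeister_infinite; have [c ->] := G1; apply; exact: finite_set1.
move=> H; have := H _ (@phi1_auto R) (@phi1_homeo R).
rewrite /reidemeister_infinite; have [c ->] := Q1; apply; exact: finite_set1.
Qed.
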